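(* Let $G=(V,E)$ be a graph and let $\{A_\xi:\xi<\mu\}$ (for some ordinal $\mu$) be a family of subsets of $V$ with $\bigcup_{\xi<\mu}A_\xi=V$, such that for every $\xi<\mu$ the subgraph of $G$ spanned by $A_\xi$ has chromatic number at most $\omega$. Write $\bigcup A_{<\xi}=\bigcup\{A_\zeta:\zeta<\xi\}$. Suppose that for all $\xi<\mu$ and all $x\in A_\xi\setminus \bigcup A_{<\xi}$ we have $|N_G(x)\cap \bigcup A_{<\xi}|<\omega$. Then the chromatic number of $G$ is at most $\omega$.
   Context: For a graph $G=(V,E)$ and $v\in V$, $N_G(v)=\{w\in V:\{v,w\}\in E\}$. The chromatic number of $G$ is the least cardinal $\kappa$ such that $V$ is covered by $\kappa$ many independent sets. *)

(* Defs.v *)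
From Stdlib Require Import List.

(* A (simple) graph on a vertex type V is given by an adjacency relation E;
   N_G(v) = fun w => E v w. *)
Definition symmetric_rel {V : Type} (E : V -> V -> Prop) : Prop :=
  forall x y, E x y -> E y x.
Definition irreflexive_rel {V : Type} (E : V -> V -> Prop) : Prop :=
  forall x, ~ E x x.

Definition independent {V : Type} (E : V -> V -> Prop) (S : V -> Prop) : Prop :=
  forall x y, S x -> S y -> ~ E x y.

(* The subgraph of G spanned by A has chromatic number at most omega:
   A is covered by (at most) countably many independent sets (indexed by nat;
   empty sets are allowed, so fewer than omega many are also covered). *)
Definition chrom_le_omega_on {V : Type} (E : V -> V -> Prop) (A : V -> Prop) : Prop :=
  exists C : nat -> V -> Prop,
    (forall n x, C n x -> A x) /\
    (forall n, independent E (C n)) /\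
    (forall x, A x -> exists n, C n x).

Definition chrom_le_omega {V : Type} (E : V -> V -> Prop) : Prop :=
  chrom_le_omega_on E (fun _ => True).

Definition finite_set {V : Type} (S : V -> Prop) : Prop :=
  exists l : list V, forall x, S x -> In x l.

(* An ordinal mu is represented by a well-ordered index type (I, lt):
   a strict total order that is well-founded. *)
Definition well_order {I : Type} (lt : I -> I -> Prop) : Prop :=
  well_founded lt /\
  (forall a b c, lt a b -> lt b c -> lt a c) /\
  (forall a b, lt a b \/ a = b \/ lt b a).

Definition union_below {I V : Type} (lt : I -> I -> Prop) (A : I -> V -> Prop)
  (xi : I) : V -> Prop :=
  fun v => exists zeta, lt zeta xi /\ A zeta v.

(* Main.v *)
Require Import Defs.
From Stdlib Require Import List Lia Classical ClassicalEpsilon Cantor Inverse_Image.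

Fixpoint sumlist (l : list nat) : nat :=
  match l with nil => 0 | a :: r => a + sumlist r end.

Lemma sumlist_in x l : In x l -> x <= sumlist l.
Proof. induction l; simpl; intros H; [contradiction|]. destruct H; subst; [lia|]. specialize (IHl H); lia. Qed.

Theorem mainTheorem1 (V : Type) (E : V -> V -> Prop)
  (Esym : symmetric_rel E) (Eirr : irreflexive_rel E)
  (I : Type) (lt : I -> I -> Prop) (Hwo : well_order lt)
  (A : I -> V -> Prop)
  (Hcover : forall v, exists xi, A xi v)
  (Hcol : forall xi, chrom_le_omega_on E (A xi))
  (Hfin : forall xi x, A xi x -> ~ union_below lt A xi x ->
            finite_set (fun y => E x y /\ union_below lt A xi y)) :
  chrom_le_omega E.
Proof.
  destruct Hwo as [Hwf [Htr Htri]].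
  assert (Hmin : forall v, exists m, A m v /\ forall z, lt z m -> ~ A z v).
  { intro v. destruct (Hcover v) as [xi Hxi]. revert Hxi.
    induction xi as [xi IH] using (well_founded_induction Hwf). intros Hxi.
    destruct (classic (exists z, lt z xi /\ A z v)) as [[z [Hz1 Hz2]]|Hn].
    - exact (IH z Hz1 Hz2).
    - exists xi; split; auto. intros z Hz Ha; apply Hn; eauto. }
  pose (rank v := proj1_sig (constructive_indefinite_description _ (Hmin v))).
  assert (Hrank : forall v, A (rank v) v /\ forall z, lt z (rank v) -> ~ A z v).
  { intro v; exact (proj2_sig (constructive_indefinite_description _ (Hmin v))). }
  assert (Hnub : forall v, ~ union_below lt A (rank v) v).
  { intros v [z [Hz Ha]]. exact (proj2 (Hrank v) z Hz Ha). }
  pose (L v := proj1_sig (constructive_indefinite_description _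
                 (Hfin (rank v) v (proj1 (Hrank v)) (Hnub v)))).
  assert (HL : forall v y, E v y -> union_below lt A (rank v) y -> In y (L v)).
  { intros v y H1 H2. exact (proj2_sig (constructive_indefinite_description _
                 (Hfin (rank v) v (proj1 (Hrank v)) (Hnub v))) y (conj H1 H2)). }
  pose (R := fun w v => lt (rank w) (rank v)).
  assert (HRwf : well_founded R) by (exact (wf_inverse_image V I lt rank Hwf)).
  pose (F := fun (v : V) (rec : forall w, R w v -> nat) =>
    S (sumlist (map (fun w => match excluded_middle_informative (R w v) with
                              | left H => rec w H | right _ => 0 end) (L v)))).
  pose (g := Fix HRwf (fun _ => nat) F).
  assert (Hg : forall v, g v = F v (fun w _ => g w)).
  { intro v. unfold g. refine (Fix_eq HRwf (fun _ => nat) F _ v). intros x f f' Hff. unfold F. f_equal. f_equal.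
    apply map_ext. intro w. destruct (excluded_middle_informative (R w x)); auto. }
  assert (Hgt : forall v w, R w v -> In w (L v) -> g w < g v).
  { intros v w Hr Hin. rewrite (Hg v). unfold F.
    assert (Hm : In (g w) (map (fun w0 => match excluded_middle_informative (R w0 v) with
                              | left _ => g w0 | right _ => 0 end) (L v))).
    { apply in_map_iff. exists w; split; auto.
      destruct (excluded_middle_informative (R w v)); [auto|contradiction]. }
    apply sumlist_in in Hm. lia. }
  pose (Cs xi := proj1_sig (constructive_indefinite_description _ (Hcol xi))).
  assert (HCs : forall xi, (forall n x, Cs xi n x -> A xi x) /\
    (forall n, independent E (Cs xi n)) /\ (forall x, A xi x -> exists n, Cs xi n x)).
  { intro xi; exact (proj2_sig (constructive_indefinite_description _ (Hcol xi))). }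
  assert (Hc : forall v, exists n, Cs (rank v) n v).
  { intro v. apply (proj2 (proj2 (HCs (rank v)))). apply Hrank. }
  pose (c v := proj1_sig (constructive_indefinite_description _ (Hc v))).
  assert (Hcc : forall v, Cs (rank v) (c v) v).
  { intro v; exact (proj2_sig (constructive_indefinite_description _ (Hc v))). }
  exists (fun k x => of_nat k = (c x, g x)).
  split; [auto|split].
  - intros k x y Hx Hy Exy. rewrite Hx in Hy. injection Hy as H1 H2.
    assert (Hlow : forall a b, E a b -> lt (rank b) (rank a) -> g b < g a).
    { intros a b Eab Hlt. apply Hgt; [exact Hlt|]. apply HL; auto.
      exists (rank b); split; auto. apply Hrank. }
    destruct (Htri (rank x) (rank y)) as [Hl|[He|Hl]].
    + pose proof (Hlow y x (Esym _ _ Exy) Hl). lia.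
    + apply ((proj1 (proj2 (HCs (rank x)))) (c x) x y (Hcc x)); auto.
      rewrite H1, He. apply Hcc.
    + pose proof (Hlow x y Exy Hl). lia.
  - intros x _. exists (to_nat (c x, g x)). apply cancel_of_to.
Qed.
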